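(* Consider a seller with one item and a single ex-post rational buyer; the item's quality $q\in Q=[q_1,q_2]$ has CDF $G$ and density $g$ and is observed only by the seller; the buyer's valuation $v(q)$ is monotone increasing in $q$ with inverse $v^{-1}$. The optimal revenue over obedient fixed-price signaling mechanisms equals the optimal revenue over fixed-price mechanisms without signaling (both equal to $\max_p[1-G(v^{-1}(p))]\cdot p$).
   Context: Fixed-price mechanism (no signaling): the seller posts price $p$; the ex-post rational buyer buys iff $v(q)\ge p$; revenue is $p\cdot\Pr[v(q)\ge p]$. Fixed-price signaling mechanism: a pair $(\pi,p)$ with $\pi:Q\to[0,1]$ the probability of sending signal 1 (''buy'') at quality $q$; it is obedient if $\int_{q_1}^{v^{-1}(p)}\pi(q)g(q)\,\mathrm{d}q=0$ and $\int_{v^{-1}(p)}^{q_2}[1-\pi(q)]g(q)\,\mathrm{d}q=0$; its revenue is $p\int_Q\pi(q)g(q)\,\mathrm{d}q$. *)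

(* Defs.v *)
From HB Require Import structures.
From mathcomp Require Import all_boot all_order all_algebra.
From mathcomp Require Import all_classical all_reals all_analysis.
Set Implicit Arguments. Unset Strict Implicit. Unset Printing Implicit Defensive.
Import Order.TTheory GRing.Theory Num.Theory.
Local Open Scope classical_set_scope.
Local Open Scope ring_scope.

Section Mech.
Variables (R : realType) (q1 q2 : R) (g v : R -> R).

Definition leb := (@lebesgue_measure R).

Definition prob_buy (p : R) : \bar R :=
  (\int[leb]_(q in `[q1, q2] `&` [set q | (p <= v q)%R]) (g q)%:E)%E.

Definition fp_revenue (p : R) : \bar R := (p%:E * prob_buy p)%E.

(* pi : Q -> [0,1], probability of sending signal 1 ("buy") at quality q. *)
Definition signaling_scheme (pi : R -> R) : Prop :=
  measurable_fun `[q1, q2] pi /\ (forall q, q1 <= q <= q2 -> 0 <= pi q <= 1).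

(* Obedience: qualities q below v^{-1}(p), i.e. v q < p, never get signal 1;
   qualities at/above v^{-1}(p), i.e. v q >= p, always get signal 1
   (up to g-null sets, as expressed by the integrals). *)
Definition obedient (pi : R -> R) (p : R) : Prop :=
  (\int[leb]_(q in `[q1, q2] `&` [set q | (v q < p)%R]) (pi q * g q)%:E = 0)%E /\
  (\int[leb]_(q in `[q1, q2] `&` [set q | (p <= v q)%R]) ((1 - pi q) * g q)%:E = 0)%E.

Definition sig_revenue (pi : R -> R) (p : R) : \bar R :=
  (p%:E * \int[leb]_(q in `[q1, q2]) (pi q * g q)%:E)%E.

Definition opt_fixed_price : \bar R :=
  ereal_sup [set fp_revenue p | p in [set: R]].

Definition opt_obedient_signaling : \bar R :=
  ereal_sup [set r | exists pi p, signaling_scheme pi /\ obedient pi p /\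
                                  r = sig_revenue pi p].
End Mech.

(* Main.v *)
Require Import Defs.
From HB Require Import structures.
From mathcomp Require Import all_boot all_order all_algebra.
From mathcomp Require Import all_classical all_reals all_analysis.
From mathcomp Require Import measurable_realfun.
Import Order.TTheory GRing.Theory Num.Theory.
Local Open Scope classical_set_scope.
Local Open Scope ring_scope.

Section Aux.
Variables (R : realType) (q1 q2 : R) (v : R -> R).
Hypothesis v_incr : {in `[q1, q2]&, {mono v : x y / x < y}}.

Lemma v_le x y : x \in `[q1, q2] -> y \in `[q1, q2] -> x <= y -> v x <= v y.
Proof.
move=> xQ yQ; rewrite le_eqVlt => /orP[/eqP -> //|xy].
by apply: ltW; rewrite v_incr.
Qed.

Lemma S_meas p : measurable (`[q1, q2] `&` [set q | p <= v q]).
Proof.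
apply: is_interval_measurable => x y [Qx px] [Qy py] z /andP[xz zy].
have Qz : z \in `[q1, q2].
  move: Qx Qy => /=; rewrite !in_itv /= => /andP[h1 _] /andP[_ h2].
  by rewrite (le_trans h1 xz) (le_trans zy h2).
split; first exact: Qz.
rewrite /=; apply: (le_trans px); apply: v_le => //; exact: mem_set.
Qed.

Lemma T_meas p : measurable (`[q1, q2] `&` [set q | v q < p]).
Proof.
have -> : `[q1, q2] `&` [set q | v q < p] = `[q1, q2] `\` (`[q1, q2] `&` [set q | p <= v q]).
  apply/seteqP; split => x /=.
    by move=> [Qx vx]; split => // -[_]; rewrite leNgt vx.
  by move=> [Qx H]; split => //; rewrite ltNge; apply/negP => H'; apply: H.
by apply: measurableD => //; exact: S_meas.
Qed.

Lemma Q_split p : (`[q1, q2])%classic = (`[q1, q2] `&` [set q | v q < p]) `|` (`[q1, q2] `&` [set q | p <= v q]).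
Proof.
rewrite -setIUr; apply/esym/setIidl => x _ /=.
by case: (ltP (v x) p) => H; [left|right].
Qed.

Lemma TS_disj p : [disjoint (`[q1, q2] `&` [set q | v q < p]) & (`[q1, q2] `&` [set q | p <= v q])].
Proof.
rewrite disj_set2E; apply/eqP/seteqP; split => x //= [[_ h1] [_ h2]].
by move: h1; rewrite ltNge h2.
Qed.
End Aux.

Lemma key (R : realType) (q1 q2 : R) (g v f : R -> R) (p : R)
  (g_meas : measurable_fun `[q1, q2] g)
  (g_ge0 : forall q, q1 <= q <= q2 -> 0 <= g q)
  (v_incr : {in `[q1, q2]&, {mono v : x y / x < y}})
  (mpi : measurable_fun `[q1, q2] f)
  (pi01 : forall q, q1 <= q <= q2 -> 0 <= f q <= 1)
  (hob : obedient q1 q2 g v f p) :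
  (\int[leb (R:=R)]_(q in `[q1, q2] `&` [set q | (p <= v q)%R]) (g q)%:E =
   \int[leb (R:=R)]_(q in `[q1, q2]) (f q * g q)%:E)%E.
Proof.
case: hob => ob1 ob2.
  set S := `[q1, q2] `&` [set q | (p <= v q)%R].
  have mS : measurable S by exact: S_meas.
  have mQ : measurable (`[q1, q2]%classic : set R) by exact: measurable_itv.
  have SQ : S `<=` `[q1, q2] by exact: subIsetl.
  have Qb x : `[q1, q2]%classic x -> q1 <= x <= q2 by rewrite /= in_itv.
  have mfg : measurable_fun `[q1, q2] (fun q => (f q * g q)%:E).
    by apply/measurable_EFinP; exact: measurable_funM.
  have m1fg : measurable_fun `[q1, q2] (fun q => ((1 - f q) * g q)%:E).
    apply/measurable_EFinP; apply: measurable_funM => //.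
    by apply: measurable_funB => //; exact: measurable_cst.
  rewrite (@Q_split R q1 q2 v p) ge0_integral_setU //; first last.
  - exact: TS_disj.
  - move=> x; rewrite -Q_split => /Qb Qx; rewrite lee_fin mulr_ge0 //.
      by case/andP: (pi01 _ Qx).
    exact: g_ge0.
  - by rewrite -Q_split.
  - exact: T_meas.
  rewrite ob1 add0e.
  transitivity (\int[leb (R:=R)]_(q in S) ((f q * g q)%:E + ((1 - f q) * g q)%:E))%E.
    apply: eq_integral => x _; rewrite -EFinD; congr EFin.
    by rewrite -mulrDl (addrC (f x)) subrK mul1r.
  rewrite ge0_integralD //.
  - by rewrite ob2 adde0.
  - move=> x /SQ /Qb Qx; rewrite lee_fin mulr_ge0 //.
      by case/andP: (pi01 _ Qx).
    exact: g_ge0.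
  - exact: measurable_funS mfg.
  - move=> x /SQ /Qb Qx; rewrite lee_fin mulr_ge0 //.
      by case/andP: (pi01 _ Qx) => _; rewrite subr_ge0.
    exact: g_ge0.
  - exact: measurable_funS m1fg.
Qed.

Theorem mainTheorem4 (R : realType) (q1 q2 : R) (g v : R -> R)
  (hq : q1 < q2)
  (g_meas : measurable_fun `[q1, q2] g)
  (g_ge0 : forall q, q1 <= q <= q2 -> 0 <= g q)
  (g_int1 : (\int[@lebesgue_measure R]_(q in `[q1, q2]) (g q)%:E = 1)%E)
  (v_incr : {in `[q1, q2]&, {mono v : x y / x < y}}) :
  opt_obedient_signaling q1 q2 g v = opt_fixed_price q1 q2 g v.
Proof.
rewrite /opt_obedient_signaling /opt_fixed_price; congr ereal_sup.
apply/seteqP; split.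
- move=> r [f [p [ [mpi pi01] [ [ob1 ob2] ->]]]]; exists p => //.
  rewrite /fp_revenue /sig_revenue /prob_buy; congr (_ * _)%E.
  exact: key.
- move=> r [p _ <-].
  set S := `[q1, q2] `&` [set q | (p <= v q)%R].
  have mS : measurable S by exact: S_meas.
  have mQ : measurable (`[q1, q2]%classic : set R) by exact: measurable_itv.
  have b01 : forall q, q1 <= q <= q2 -> 0 <= (\1_S : R -> R) q <= 1.
    move=> q _; rewrite /indic; case: (q \in S) => /=; rewrite ?ler01 ?lexx ?ler0n //.
  have hob : obedient q1 q2 g v (\1_S : R -> R) p.
    split.
    - transitivity (\int[leb (R:=R)]_(q in `[q1, q2] `&` [set q | (v q < p)%R]) (cst 0%E q))%E;
        last exact: integral0.
      apply: eq_integral => x /set_mem [Qx vx].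
      rewrite /indic memNset ?mul0r //.
      by move=> [_ /= h]; move: (lt_le_trans vx h); rewrite ltxx.
    - transitivity (\int[leb (R:=R)]_(q in `[q1, q2] `&` [set q | (p <= v q)%R]) (cst 0%E q))%E;
        last exact: integral0.
      apply: eq_integral => x /set_mem xS.
      by rewrite /indic mem_set // subrr mul0r.
  exists (\1_S : R -> R), p; split; [split|split] => //.
  rewrite /sig_revenue /fp_revenue /prob_buy; congr (_ * _)%E.
  apply: key => //.
Qed.
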